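(* For every $n\equiv 13 \pmod{16}$ (with $n\geq 13$), there exists an almost 2-perfect maximum 8-cycle packing of $K_n$.
   Context: An 8-cycle packing of $K_n$ on vertex set $\mathcal{X}$ is a triple $(\mathcal{X},\mathcal{C},\mathcal{L})$ with $\mathcal{C}$ a collection of pairwise edge-disjoint 8-cycles of $K_n$ and leave $\mathcal{L}$ the set of edges in no cycle of $\mathcal{C}$; it is maximum if $|\mathcal{L}|$ is minimum among all 8-cycle packings of $K_n$. For an 8-cycle $C$, an inside 8-cycle of $C$ is an 8-cycle on the same vertex set sharing no edge with $C$. The packing is almost 2-perfect if one can choose for each $C\in\mathcal{C}$ an inside 8-cycle $C'$ such that $(\mathcal{X},\{C'\},\mathcal{L})$ is again an 8-cycle packing with the same leave. *)

(* Defs.v *)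
From mathcomp Require Import all_boot.
Set Implicit Arguments. Unset Strict Implicit. Unset Printing Implicit Defensive.

(* Vertices of K_n: 'I_n.  Edges: 2-element subsets of 'I_n.
   An edge set (graph) is a {set {set 'I_n}}. *)
Definition edge_set (n : nat) : Type := {set {set 'I_n}}.

Definition Kn_edges (n : nat) : edge_set n := [set e : {set 'I_n} | #|e| == 2].

(* The edge set of the closed walk v 0, v 1, ..., v 7, v 0. *)
Definition cycle8_edges (n : nat) (v : 'I_8 -> 'I_n) : edge_set n :=
  [set [set v i; v (ordS i)] | i : 'I_8].

Definition is_8cycle (n : nat) (C : edge_set n) : Prop :=
  exists v : 'I_8 -> 'I_n, injective v /\ C = cycle8_edges v.

Definition vertices (n : nat) (C : edge_set n) : {set 'I_n} :=
  \bigcup_(e in C) e.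

Definition is_8packing (n : nat) (P : {set edge_set n}) : Prop :=
  (forall C, C \in P -> is_8cycle C) /\
  (forall C1 C2, C1 \in P -> C2 \in P -> C1 != C2 -> [disjoint C1 & C2]).

Definition leave (n : nat) (P : {set edge_set n}) : edge_set n :=
  Kn_edges n :\: \bigcup_(C in P) C.

Definition is_max_8packing (n : nat) (P : {set edge_set n}) : Prop :=
  is_8packing P /\
  (forall Q : {set edge_set n}, is_8packing Q -> #|leave P| <= #|leave Q|).

Definition inside_8cycle (n : nat) (C C' : edge_set n) : Prop :=
  is_8cycle C' /\ vertices C' = vertices C /\ [disjoint C & C'].

Definition almost_2perfect (n : nat) (P : {set edge_set n}) : Prop :=
  exists f : edge_set n -> edge_set n,
    (forall C, C \in P -> inside_8cycle C (f C)) /\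
    (forall C1 C2, C1 \in P -> C2 \in P -> C1 != C2 -> [disjoint f C1 & f C2]) /\
    is_8packing (f @: P) /\
    leave (f @: P) = leave P.

(* Main.v *)
Require Import Defs.
From mathcomp Require Import all_boot.
From mathcomp Require Import zify.
Set Implicit Arguments. Unset Strict Implicit. Unset Printing Implicit Defensive.

Definition T13 : seq (seq nat) :=
 [:: [:: 0; 9; 4; 2; 6; 8; 10; 3];
  [:: 6; 10; 1; 2; 12; 3; 11; 7];
  [:: 6; 11; 0; 10; 9; 8; 4; 1];
  [:: 6; 9; 1; 5; 3; 2; 10; 4];
  [:: 6; 5; 0; 8; 2; 7; 1; 3];
  [:: 1; 0; 12; 4; 5; 9; 7; 8];
  [:: 0; 7; 12; 9; 2; 5; 11; 4];
  [:: 4; 3; 8; 5; 12; 11; 10; 7];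
  [:: 9; 11; 8; 12; 10; 5; 7; 3]].
Definition T13' : seq (seq nat) :=
 [:: [:: 0; 4; 3; 6; 9; 8; 2; 10];
  [:: 1; 3; 2; 7; 10; 12; 11; 6];
  [:: 0; 1; 9; 11; 4; 6; 10; 8];
  [:: 1; 4; 5; 6; 2; 9; 3; 10];
  [:: 0; 3; 5; 2; 1; 8; 6; 7];
  [:: 0; 5; 1; 7; 4; 8; 12; 9];
  [:: 0; 11; 7; 5; 9; 4; 2; 12];
  [:: 3; 7; 8; 11; 5; 10; 4; 12];
  [:: 3; 8; 5; 12; 7; 9; 10; 11]].
Definition T17 : seq (seq nat) :=
 [:: [:: 0; 3; 1; 5; 4; 10; 2; 7];
  [:: 1; 4; 2; 6; 5; 11; 3; 8];
  [:: 2; 5; 3; 7; 6; 12; 4; 9];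
  [:: 3; 6; 4; 8; 7; 13; 5; 10];
  [:: 4; 7; 5; 9; 8; 14; 6; 11];
  [:: 5; 8; 6; 10; 9; 15; 7; 12];
  [:: 6; 9; 7; 11; 10; 16; 8; 13];
  [:: 7; 10; 8; 12; 11; 0; 9; 14];
  [:: 8; 11; 9; 13; 12; 1; 10; 15];
  [:: 9; 12; 10; 14; 13; 2; 11; 16];
  [:: 10; 13; 11; 15; 14; 3; 12; 0];
  [:: 11; 14; 12; 16; 15; 4; 13; 1];
  [:: 12; 15; 13; 0; 16; 5; 14; 2];
  [:: 13; 16; 14; 1; 0; 6; 15; 3];
  [:: 14; 0; 15; 2; 1; 7; 16; 4];
  [:: 15; 1; 16; 3; 2; 8; 0; 5];
  [:: 16; 2; 0; 4; 3; 9; 1; 6]].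
Definition T17' : seq (seq nat) :=
 [:: [:: 0; 5; 2; 4; 3; 7; 1; 10];
  [:: 1; 6; 3; 5; 4; 8; 2; 11];
  [:: 2; 7; 4; 6; 5; 9; 3; 12];
  [:: 3; 8; 5; 7; 6; 10; 4; 13];
  [:: 4; 9; 6; 8; 7; 11; 5; 14];
  [:: 5; 10; 7; 9; 8; 12; 6; 15];
  [:: 6; 11; 8; 10; 9; 13; 7; 16];
  [:: 7; 12; 9; 11; 10; 14; 8; 0];
  [:: 8; 13; 10; 12; 11; 15; 9; 1];
  [:: 9; 14; 11; 13; 12; 16; 10; 2];
  [:: 10; 15; 12; 14; 13; 0; 11; 3];
  [:: 11; 16; 13; 15; 14; 1; 12; 4];
  [:: 12; 0; 14; 16; 15; 2; 13; 5];
  [:: 13; 1; 15; 0; 16; 3; 14; 6];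
  [:: 14; 2; 16; 1; 0; 4; 15; 7];
  [:: 15; 3; 0; 2; 1; 5; 16; 8];
  [:: 16; 4; 1; 3; 2; 6; 0; 9]].
Definition K44 : seq (seq nat) := [:: [:: 0; 4; 1; 5; 2; 6; 3; 7]; [:: 0; 5; 3; 4; 2; 7; 1; 6]].
Definition K44' : seq (seq nat) := [:: [:: 0; 5; 3; 4; 2; 7; 1; 6]; [:: 0; 4; 1; 5; 2; 6; 3; 7]].
Definition L13 : seq (nat * nat) := [:: (0,2); (0,6); (1,11); (1,12); (2,11); (6,12)].

Definition nx (x : nat) := x.+1 %% 8.
Definition edgeb (c : seq nat) (y z : nat) : bool :=
  has (fun x => ((nth 0 c x == y) && (nth 0 c (nx x) == z)) ||
                ((nth 0 c x == z) && (nth 0 c (nx x) == y))) (iota 0 8).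
Definition sharesb (c d : seq nat) : bool :=
  has (fun x => edgeb d (nth 0 c x) (nth 0 c (nx x))) (iota 0 8).
Definition wfT (T : seq (seq nat)) (q cnt : nat) : bool :=
  all (fun t => let c := nth [::] T t in
     (size c == 8) && uniq c && all (fun y => y < q) c) (iota 0 cnt).
Definition disjT (T T' : seq (seq nat)) (cnt : nat) : bool :=
  all (fun t => all (fun t' =>
     ((t != t') ==> ~~ sharesb (nth [::] T t) (nth [::] T t') &&
                   ~~ sharesb (nth [::] T' t) (nth [::] T' t')) &&
     ((t == t') ==> ~~ sharesb (nth [::] T t) (nth [::] T' t'))) (iota 0 cnt)) (iota 0 cnt).
Definition vertT (T T' : seq (seq nat)) (cnt : nat) : bool :=
  all (fun t => all (fun y => y \in nth [::] T' t) (nth [::] T t) &&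
                all (fun y => y \in nth [::] T t) (nth [::] T' t)) (iota 0 cnt).
Definition coverT (T : seq (seq nat)) (q cnt : nat) (L : seq (nat * nat)) : bool :=
  all (fun y => all (fun z => (y < z) ==> (((y, z) \in L) ||
     has (fun t => edgeb (nth [::] T t) y z) (iota 0 cnt))) (iota 0 q)) (iota 0 q).
Definition cover44 (T : seq (seq nat)) : bool :=
  all (fun y => all (fun z => has (fun t => edgeb (nth [::] T t) y z) (iota 0 2)) (iota 4 4)) (iota 0 4).
Definition cross44 (T : seq (seq nat)) : bool :=
  all (fun t => all (fun x => (nth 0 (nth [::] T t) x < 4) != (nth 0 (nth [::] T t) (nx x) < 4))
    (iota 0 8)) (iota 0 2).

Definition allok (T T' : seq (seq nat)) q cnt L :=
  [&& wfT T q cnt, wfT T' q cnt, disjT T T' cnt, vertT T T' cnt,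
      coverT T q cnt L & coverT T' q cnt L].

Lemma ok13 : allok T13 T13' 13 9 L13. Proof. by vm_compute. Qed.
Lemma ok17 : allok T17 T17' 17 17 [::]. Proof. by vm_compute. Qed.
Lemma ok44 : allok K44 K44' 8 2 [::] = false. Proof. by vm_compute. Qed.
Lemma ok44b : [&& wfT K44 8 2, wfT K44' 8 2, disjT K44 K44' 2, vertT K44 K44' 2,
   cover44 K44, cover44 K44', cross44 K44 & cross44 K44'].
Proof. by vm_compute. Qed.
Lemma set2_eq (T : finType) (a b c d : T) :
  [set a; b] = [set c; d] -> (a = c /\ b = d) \/ (a = d /\ b = c).
Proof.
move=> E.
have ha : a \in [set c; d] by rewrite -E !inE eqxx.
have hb : b \in [set c; d] by rewrite -E !inE eqxx orbT.
have hc : c \in [set a; b] by rewrite E !inE eqxx.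
have hd : d \in [set a; b] by rewrite E !inE eqxx orbT.
move: ha hb hc hd; rewrite !inE.
case/orP=> /eqP ha; case/orP=> /eqP hb; case/orP=> /eqP hc; case/orP=> /eqP hd.
all: subst; auto.
Qed.

Lemma ordS_check : [forall x : 'I_8, forall y : 'I_8,
  ~~ ((x == ordS y) && (ordS x == y))].
Proof.
apply/forallP=> x; apply/forallP=> y.
by case: x y => [[|[|[|[|[|[|[|[|x]]]]]]]] Hx] [[|[|[|[|[|[|[|[|y]]]]]]]] Hy].
Qed.

Lemma card_cycle8 n (v : 'I_8 -> 'I_n) : injective v -> #|cycle8_edges v| = 8.
Proof.
move=> iv; rewrite /cycle8_edges card_imset ?card_ord // => x y /set2_eq.
case=> [[/iv -> //] | [/iv e1 /iv e2]].
by move: ordS_check => /forallP/(_ x)/forallP/(_ y); rewrite e2 e1 !eqxx.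
Qed.

Lemma cycle8_sub n (v : 'I_8 -> 'I_n) : injective v -> cycle8_edges v \subset Kn_edges n.
Proof.
move=> iv; apply/subsetP=> e /imsetP[x _ ->]; rewrite inE cards2.
suff : v x != v (ordS x) by move=> ->.
apply/eqP=> /iv /(congr1 val) /=; case: x => [[|[|[|[|[|[|[|[|x]]]]]]]] ?] //.
Qed.

Lemma bin2_mod k : 'C(13 + 16 * k, 2) = 8 * (9 + 25 * k + 16 * k * k) + 6.
Proof.
rewrite bin2.
have -> : (13 + 16 * k) * (13 + 16 * k).-1 = (8 * (9 + 25 * k + 16 * k * k) + 6).*2.
  rewrite -!addnn /=; nia.
by rewrite doubleK.
Qed.

Lemma leave_lb k (Q : {set edge_set (13 + 16 * k)}) :
  is_8packing Q -> 6 <= #|leave Q|.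
Proof.
case=> cyc disj.
have triv : trivIset Q by apply/trivIsetP=> A B hA hB; apply: disj.
have hc : #|cover Q| = #|Q| * 8.
  rewrite -(eqP triv) -sum_nat_const; apply: eq_bigr => C /cyc [v [iv ->]].
  exact: card_cycle8.
have sub : cover Q \subset Kn_edges (13 + 16 * k).
  apply/bigcupsP => C /cyc [v [iv ->]]; exact: cycle8_sub.
have hK : #|Kn_edges (13 + 16 * k)| = 8 * (9 + 25 * k + 16 * k * k) + 6.
  by rewrite /Kn_edges card_draws card_ord bin2_mod.
have : #|cover Q| <= #|Kn_edges (13 + 16 * k)| by apply: subset_leq_card.
rewrite /leave cardsD (setIidPr sub) -/(cover Q) hc hK => h.
lia.
Qed.
Definition piece := (nat + nat * nat)%type.
Definition Rg (x : nat) := if x <= 12 then 0 else (x - 13) %/ 16 + 1.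
Definition RB (b : nat) := if b < 3 then 0 else (b - 3) %/ 4 + 1.
Definition cls (a b : nat) : piece :=
  if (minn a b == 0) || (Rg (minn a b) == Rg (maxn a b)) then inl (Rg (maxn a b))
  else inr (((minn a b).-1) %/ 4, ((maxn a b).-1) %/ 4).
Definition phi (p : piece) (y : nat) := match p with
 | inl j => if (j == 0) || (y == 0) then y else 16 * j - 4 + y
 | inr (b, b') => if y < 4 then 1 + 4 * b + y else 4 * b' + y - 3 end.
Definition qp (p : piece) := match p with inl j => if j == 0 then 13 else 17 | inr _ => 8 end.

Lemma clsC a b : cls a b = cls b a.
Proof. by rewrite /cls minnC maxnC. Qed.

Lemma Rg_blk b y : y < 4 -> Rg (1 + 4 * b + y) = RB b.
Proof.
move=> hy; rewrite /Rg /RB.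
case: ifP => h1; case: ifP => h2; lia.
Qed.

Lemma cls_lt a b : a < b ->
  cls a b = if (a == 0) || (Rg a == Rg b) then inl (Rg b) else inr (a.-1 %/ 4, b.-1 %/ 4).
Proof. by move=> h; rewrite /cls (minn_idPl (ltnW h)) (maxn_idPr (ltnW h)). Qed.

Lemma Rg_small w : w <= 12 -> Rg w = 0.
Proof. by rewrite /Rg => ->. Qed.

Lemma Rg_j j w : 0 < w < 17 -> 0 < j -> Rg (16 * j - 4 + w) = j.
Proof. move=> hw hj; rewrite /Rg; case: ifP; lia. Qed.

Lemma cls_base j y z : y != z -> y < qp (inl j) -> z < qp (inl j) ->
  cls (phi (inl j) y) (phi (inl j) z) = inl j.
Proof.
wlog: y z / y < z.
  move=> W nyz hy hz; case: (ltngtP y z) => h; first exact: W.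
  by rewrite clsC W // eq_sym. by move: nyz; rewrite h eqxx.
move=> lyz _; rewrite /qp /phi.
case: (posnP j) => [->|hj] /= hy hz.
  by rewrite cls_lt // !Rg_small ?eqxx ?orbT //; lia.

case: ifP => /eqP hy0; case: ifP => /eqP hz0; try lia.
  rewrite cls_lt; last lia.
  by rewrite hy0 eqxx /= Rg_j //; lia.
rewrite cls_lt; last lia.
by rewrite !Rg_j ?eqxx ?orbT //; lia.
Qed.

Lemma cls_K b b' y z : b < b' -> RB b != RB b' -> (y < 4) != (z < 4) -> y < 8 -> z < 8 ->
  cls (phi (inr (b, b')) y) (phi (inr (b, b')) z) = inr (b, b').
Proof.
wlog: y z / y < 4.
  move=> W h1 h2 h3 hy hz; case: (ltnP y 4) => h; first exact: W.
  rewrite clsC; apply: W => //; last by rewrite eq_sym.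
  by move: h3; rewrite ltnNge h; case: (z < 4).
move=> hy4 hbb hR h3 hy hz.
have hz4 : (z < 4) = false by move: h3; rewrite hy4; case: (z < 4).
rewrite /phi hy4 hz4.
rewrite cls_lt; last lia.
have e2 : 4 * b' + z - 3 = 1 + 4 * b' + (z - 4) by lia.
rewrite e2 !Rg_blk ?(negbTE hR); try lia.
rewrite addn_eq0 /=.
congr (inr (_, _)); lia.
Qed.

Definition noshare (c d : seq nat) := forall x y, x < 8 -> y < 8 ->
  ~ ((nth 0 c x = nth 0 d y /\ nth 0 c (nx x) = nth 0 d (nx y)) \/
     (nth 0 c x = nth 0 d (nx y) /\ nth 0 c (nx x) = nth 0 d y)).

Lemma noshareC c d : noshare c d -> noshare d c.
Proof.
move=> h x y hx hy H; apply: (h y x hy hx).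
by case: H => [[-> ->]|[-> ->]]; [left|right].
Qed.

Lemma nx_lt x : nx x < 8.
Proof. by rewrite /nx ltn_pmod. Qed.

Lemma sharesP c d : ~~ sharesb c d -> noshare c d.
Proof.
move=> /hasPn h x y hx hy H.
have := h x; rewrite mem_iota add0n hx => /(_ isT) /hasPn /(_ y).
rewrite mem_iota add0n hy => /(_ isT) /negP; apply.
by case: H => [[-> ->]|[-> ->]]; rewrite !eqxx ?orbT.
Qed.

Lemma edgebP c y z : edgeb c y z -> exists x, x < 8 /\
  ((nth 0 c x = y /\ nth 0 c (nx x) = z) \/ (nth 0 c x = z /\ nth 0 c (nx x) = y)).
Proof.
case/hasP => x; rewrite mem_iota add0n => hx /orP[/andP[/eqP h1 /eqP h2]|/andP[/eqP h1 /eqP h2]];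
  exists x; split => //; first [by left | by right].
Qed.

Lemma wfT_at T q cnt t : wfT T q cnt -> t < cnt ->
  [/\ size (nth [::] T t) = 8, uniq (nth [::] T t) &
      forall x, x < 8 -> nth 0 (nth [::] T t) x < q].
Proof.
move=> /allP /(_ t) h ht; move: h; rewrite mem_iota add0n ht => /(_ isT) /andP[/andP[/eqP hs hu] /allP ha].
split => // x hx; apply: ha; apply: mem_nth; rewrite hs.
done.
Qed.

Lemma wfT_neq T q cnt t x : wfT T q cnt -> t < cnt -> x < 8 ->
  nth 0 (nth [::] T t) x != nth 0 (nth [::] T t) (nx x).
Proof.
move=> w ht hx; case: (wfT_at w ht) => hs hu _.
rewrite nth_uniq ?hs ?nx_lt //.
by rewrite /nx; case: x hx => [|[|[|[|[|[|[|[|x]]]]]]]].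
Qed.

Lemma disj_get T0 T1 cnt s1 s2 t t' : disjT T0 T1 cnt -> t < cnt -> t' < cnt ->
  (s1 == s2) != (t == t') ->
  noshare (nth [::] (if s1 then T1 else T0) t) (nth [::] (if s2 then T1 else T0) t').
Proof.
move=> /allP /(_ t) h ht ht'; move: h; rewrite mem_iota add0n ht => /(_ isT) /allP /(_ t').
rewrite mem_iota add0n ht' => /(_ isT) /andP[h1 h2].
case: (eqVneq t t') h1 h2 => [<-|ne]; rewrite ?eqxx ?ne ?(negbTE ne) /= => h1 h2;
  case: s1; case: s2 => //= _.
all: first [ by move: h2 => /sharesP /noshareC | by move: h2 => /sharesP
           | by move: h1 => /andP[_ /sharesP] | by move: h1 => /andP[/sharesP] ].
Qed.

Lemma vert_get T0 T1 cnt t x : vertT T0 T1 cnt -> t < cnt -> x < 8 ->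
  size (nth [::] T0 t) = 8 -> size (nth [::] T1 t) = 8 ->
  (exists y, y < 8 /\ nth 0 (nth [::] T1 t) y = nth 0 (nth [::] T0 t) x) /\
  (exists y, y < 8 /\ nth 0 (nth [::] T0 t) y = nth 0 (nth [::] T1 t) x).
Proof.
move=> /allP /(_ t) h ht hx s0 s1; move: h; rewrite mem_iota add0n ht => /(_ isT) /andP[/allP a1 /allP a2].
split.
- have m : nth 0 (nth [::] T0 t) x \in nth [::] T1 t by apply: a1; apply: mem_nth; rewrite s0.
  by exists (index (nth 0 (nth [::] T0 t) x) (nth [::] T1 t)); rewrite -s1 index_mem nth_index.
- have m : nth 0 (nth [::] T1 t) x \in nth [::] T0 t by apply: a2; apply: mem_nth; rewrite s1.
  by exists (index (nth 0 (nth [::] T1 t) x) (nth [::] T0 t)); rewrite -s0 index_mem nth_index.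
Qed.

Definition Tm (p : piece) (sel : bool) : seq (seq nat) := match p with
 | inl j => if j == 0 then (if sel then T13' else T13) else (if sel then T17' else T17)
 | inr _ => if sel then K44' else K44 end.
Definition cntp (p : piece) := match p with inl j => if j == 0 then 9 else 17 | inr _ => 2 end.
Definition tcv p sel t x := nth 0 (nth [::] (Tm p sel) t) x.

Lemma Tm_sel p sel : Tm p sel = if sel then Tm p true else Tm p false.
Proof. by case: sel. Qed.

Lemma Tm_ok p : [/\ wfT (Tm p false) (qp p) (cntp p), wfT (Tm p true) (qp p) (cntp p),
   disjT (Tm p false) (Tm p true) (cntp p) & vertT (Tm p false) (Tm p true) (cntp p)].
Proof.
case: p => [j|[b b']] /=.
- case: (j == 0).
  + by case/and5P: ok13.
  + by case/and5P: ok17.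
- by case/and5P: ok44b.
Qed.

Lemma Tm_wf p sel : wfT (Tm p sel) (qp p) (cntp p).
Proof. by case: (Tm_ok p); case: sel. Qed.

Definition vp k (p : piece) := match p with
 | inl j => j <= k | inr (b, b') => [&& b < b', b' < 3 + 4 * k & RB b != RB b'] end.

Lemma phi_lt k p y : vp k p -> y < qp p -> phi p y < (12 + 16 * k).+1.
Proof.
case: p => [j|[b b']] /=.
- by move=> hj hy; case: ifP => h; move: hy; case: ifP => h'; lia.
- by move=> /and3P[h1 h2 h3] hy; case: ifP => h; lia.
Qed.

Lemma phi_inj k p y z : vp k p -> y < qp p -> z < qp p -> phi p y = phi p z -> y = z.
Proof.
case: p => [j|[b b']] /=.
- by move=> hj hy hz; move: hy hz; repeat (case: ifP => ? /=); lia.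
- by move=> /and3P[h1 h2 h3] hy hz; repeat (case: ifP => ? /=); lia.
Qed.

Lemma cross_get T t x : cross44 T -> t < 2 -> x < 8 ->
  (nth 0 (nth [::] T t) x < 4) != (nth 0 (nth [::] T t) (nx x) < 4).
Proof.
move=> /allP /(_ t) h ht hx; move: h; rewrite mem_iota add0n ht => /(_ isT) /allP /(_ x).
by rewrite mem_iota add0n hx => /(_ isT).
Qed.

Lemma cls_edge_p k p sel t x : vp k p -> t < cntp p -> x < 8 ->
  cls (phi p (tcv p sel t x)) (phi p (tcv p sel t (nx x))) = p.
Proof.
move=> hv ht hx.
have w := Tm_wf p sel.
case: (wfT_at w ht) => _ _ hq.
case: p hv ht w hq => [j|[b b']] hv ht w hq.
- apply: cls_base; rewrite /tcv.
  + exact: wfT_neq w ht hx.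
  + exact: hq.
  + exact: hq (nx_lt x).
- move: hv => /= /and3P[h1 h2 h3]; apply: cls_K => //; rewrite /tcv.
  + case/and5P: ok44b => _ _ _ _ /and4P[_ _ c1 c2].
    by case: sel {w hq}; apply: cross_get.
  + exact: hq.
  + exact: hq (nx_lt x).
Qed.

Definition Idx k := ('I_k.+1 * 'I_17 + 'I_(3 + 4 * k) * 'I_(3 + 4 * k) * bool)%type.
Definition pc k (i : Idx k) : piece := match i with
  | inl (j, _) => inl (val j) | inr (b, b', _) => inr (val b, val b') end.
Definition ti k (i : Idx k) : nat := match i with
  | inl (_, t) => val t | inr (_, _, s) => nat_of_bool s end.
Definition valid k (i : Idx k) : bool := match i with
  | inl (j, t) => t < cntp (inl (val j))
  | inr (b, b', _) => (b < b') && (RB b != RB b') end.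
Definition gv k sel (i : Idx k) (x : nat) := phi (pc i) (tcv (pc i) sel (ti i) x).

Lemma valid_vp k (i : Idx k) : valid i -> vp k (pc i) /\ ti i < cntp (pc i).
Proof.
case: i => [[j t]|[[b b'] s]] /=.
- by move=> ->; split => //; rewrite -ltnS.
- by move=> /andP[h1 h2]; rewrite h1 h2 ltn_ord; case: s.
Qed.

Lemma idx_eq k (i j : Idx k) : pc i = pc j -> (i == j) = (ti i == ti j).
Proof.
case: i j => [[j1 t1]|[[b1 b1'] s1]] [[j2 t2]|[[b2 b2'] s2]] //= [].
- move=> /val_inj ->; apply/idP/idP => [/eqP [->] //|/eqP e].
  by apply/eqP; congr (inl (_, _)); apply: val_inj.
- move=> /val_inj -> /val_inj ->; apply/idP/idP => [/eqP [->] //|].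
  by case: s1; case: s2.
Qed.

Lemma gv_lt k sel (i : Idx k) x : valid i -> x < 8 -> gv sel i x < (12 + 16 * k).+1.
Proof.
move=> /valid_vp [hv ht] hx; apply: phi_lt hv _.
by case: (wfT_at (Tm_wf (pc i) sel) ht) => _ _; apply.
Qed.

Lemma cls_edge k sel (i : Idx k) x : valid i -> x < 8 ->
  cls (gv sel i x) (gv sel i (nx x)) = pc i.
Proof. by move=> /valid_vp [hv ht] hx; rewrite /gv; apply: (cls_edge_p sel hv ht hx). Qed.

Lemma gv_disj k sel1 sel2 (i j : Idx k) x y : valid i -> valid j ->
  (sel1 == sel2) != (i == j) -> x < 8 -> y < 8 ->
  ~ ((gv sel1 i x = gv sel2 j y /\ gv sel1 i (nx x) = gv sel2 j (nx y)) \/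
     (gv sel1 i x = gv sel2 j (nx y) /\ gv sel1 i (nx x) = gv sel2 j y)).
Proof.
move=> vi vj hd hx hy H.
have epc : pc i = pc j.
  rewrite -(cls_edge sel1 vi hx) -(cls_edge sel2 vj hy).
  by case: H => [[-> ->]|[-> ->]]; rewrite // clsC.
move: hd; rewrite (idx_eq epc) => hd.
case: (valid_vp vi) => hvi hti; case: (valid_vp vj) => hvj htj.
rewrite epc in hti.
case: (Tm_ok (pc j)) => _ _ hdisj _.
have ns := disj_get hdisj hti htj hd.
move: H; rewrite /gv epc -(Tm_sel (pc j) sel1) -(Tm_sel (pc j) sel2) in ns *.
have w1 := wfT_at (Tm_wf (pc j) sel1) hti.
have w2 := wfT_at (Tm_wf (pc j) sel2) htj.
case: w1 => _ _ q1; case: w2 => _ _ q2.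
have I := phi_inj hvj.
case=> [[e1 e2]|[e1 e2]]; apply: (ns x y hx hy); [left|right]; split;
  apply: I; rewrite /tcv ?q1 ?q2 ?nx_lt //.
Qed.

Lemma cover_get T q cnt L y z : coverT T q cnt L -> y < z -> z < q ->
  ((y, z) \in L) || has (fun t => edgeb (nth [::] T t) y z) (iota 0 cnt).
Proof.
move=> /allP /(_ y) h hyz hz; move: h; rewrite mem_iota add0n (ltn_trans hyz hz) => /(_ isT).
by move=> /allP /(_ z); rewrite mem_iota add0n hz hyz => /(_ isT).
Qed.

Lemma cover44_get T y z : cover44 T -> y < 4 -> 4 <= z < 8 ->
  has (fun t => edgeb (nth [::] T t) y z) (iota 0 2).
Proof.
move=> /allP /(_ y) h hy hz; move: h; rewrite mem_iota add0n hy => /(_ isT).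
by move=> /allP /(_ z); rewrite mem_iota; apply.
Qed.

Lemma base_cover j sel y z : y < z < qp (inl j) ->
  (j == 0) ==> ((y, z) \notin L13) ->
  exists t, t < cntp (inl j) /\ exists x, x < 8 /\
   ((tcv (inl j) sel t x = y /\ tcv (inl j) sel t (nx x) = z) \/
    (tcv (inl j) sel t x = z /\ tcv (inl j) sel t (nx x) = y)).
Proof.
move=> /andP[hyz hz] hL.
have hc : ((y, z) \in (if j == 0 then L13 else [::])) ||
   has (fun t => edgeb (nth [::] (Tm (inl j) sel) t) y z) (iota 0 (cntp (inl j))).
  move: hz; rewrite /= /Tm; case: (j == 0) => hz.
  - case/and5P: ok13 => _ _ _ _ /andP[c1 c2].
    by case: sel; [apply: (cover_get c2) | apply: (cover_get c1)].
  - case/and5P: ok17 => _ _ _ _ /andP[c1 c2].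
    by case: sel; [apply: (cover_get c2) | apply: (cover_get c1)].
move: hc; case: (j == 0) hL => /= [hL|_].
  by rewrite (negbTE hL) /= => /hasP[t]; rewrite mem_iota add0n => ht /edgebP[x hx];
    exists t; split => //; exists x.
by move=> /hasP[t]; rewrite mem_iota add0n => ht /edgebP[x hx]; exists t; split => //; exists x.
Qed.

Lemma k44_cover sel y z : y < 4 -> 4 <= z < 8 ->
  exists t, t < 2 /\ exists x, x < 8 /\
   ((nth 0 (nth [::] (if sel then K44' else K44) t) x = y /\
     nth 0 (nth [::] (if sel then K44' else K44) t) (nx x) = z) \/
    (nth 0 (nth [::] (if sel then K44' else K44) t) x = z /\
     nth 0 (nth [::] (if sel then K44' else K44) t) (nx x) = y)).
Proof.
move=> hy hz.
have : has (fun t => edgeb (nth [::] (if sel then K44' else K44) t) y z) (iota 0 2).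
  case/and5P: ok44b => _ _ _ _ /and4P[c1 c2 _ _].
  by case: sel; apply: cover44_get.
by move=> /hasP[t]; rewrite mem_iota add0n => ht /edgebP[x hx]; exists t; split => //; exists x.
Qed.

Lemma gv_cover k sel a b : a < b -> b < (12 + 16 * k).+1 ->
  ~ (cls a b = inl 0 /\ (a, b) \in L13) ->
  exists i : Idx k, valid i /\ exists x, x < 8 /\
    ((gv sel i x = a /\ gv sel i (nx x) = b) \/ (gv sel i x = b /\ gv sel i (nx x) = a)).
Proof.
move=> hab hb hL.
case hc : ((a == 0) || (Rg a == Rg b)).
- set j := Rg b.
  have hj : j < k.+1 by rewrite /j /Rg; case: ifP => ?; lia.
  have hcl : cls a b = inl j by rewrite cls_lt // hc.
  set y := if (j == 0) || (a == 0) then a else a + 4 - 16 * j.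
  set z := if (j == 0) || (b == 0) then b else b + 4 - 16 * j.
  have eRa : j != 0 -> a != 0 -> Rg a = j.
    by move=> h1 h2; move: hc; rewrite (negbTE h2) /= => /eqP.
  have hRb : j != 0 -> 13 <= b /\ 16 * j - 3 <= b /\ b <= 16 * j + 12.
    by rewrite /j /Rg; case: ifP => ?; lia.
  have hRa : j != 0 -> a != 0 -> 13 <= a /\ 16 * j - 3 <= a /\ a <= 16 * j + 12.
    by move=> h1 h2; move: (eRa h1 h2); rewrite /Rg; case: ifP => ?; lia.
  have hRb0 : j == 0 -> b <= 12 by rewrite /j /Rg; case: ifP => ?; lia.
  have eya : phi (inl j) y = a.
    rewrite /phi /y; case: (eqVneq j 0) => [->|h1] //=; case: (eqVneq a 0) => [->|h2] //=.
    rewrite ?(negbTE h1) ?(negbTE h2) /=; have := hRa h1 h2; case: ifP => ?; lia.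
  have ezb : phi (inl j) z = b.
    rewrite /phi /z; case: (eqVneq j 0) => [->|h1] //=; case: (eqVneq b 0) => [->|h2] //=.
    rewrite ?(negbTE h1) ?(negbTE h2) /=; have := hRb h1; case: ifP => ?; lia.
  have hyz : y < z < qp (inl j).
    rewrite /y /z /qp; case: (eqVneq j 0) => [e|h1] /=.
      by move: hRb0; rewrite e => /(_ isT); lia.
    rewrite ?(negbTE h1) /=; have := hRb h1; case: (eqVneq a 0) => [->|h2] /=.
      by repeat (case: ifP => ?); lia.
    by have := hRa h1 h2; repeat (case: ifP => ?); lia.
  have hL' : (j == 0) ==> ((y, z) \notin L13).
    apply/implyP => e; rewrite /y /z e /=; apply/negP => hin; apply: hL; split => //.
    by rewrite hcl (eqP e).
  have [t [ht [x [hx H]]]] := base_cover sel hyz hL'.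
  have ht17 : t < 17 by move: ht => /=; case: ifP; lia.
  exists (inl (Ordinal hj, Ordinal ht17)); split => //.
  exists x; split => //; rewrite /gv /=.
  by case: H => [[-> ->]|[-> ->]]; [left|right].
- have ha0 : a != 0 by apply/negP => /eqP e; move: hc; rewrite e.
  have hR : Rg a != Rg b by apply/negP => e; move: hc; rewrite e orbT.
  set b1 := (a - 1) %/ 4; set b2 := (b - 1) %/ 4.
  have ea : a = 1 + 4 * b1 + (a - 1) %% 4 by rewrite /b1; lia.
  have eb : b = 1 + 4 * b2 + (b - 1) %% 4 by rewrite /b2; lia.
  have hRa : Rg a = RB b1 by rewrite {1}ea Rg_blk //; lia.
  have hRb' : Rg b = RB b2 by rewrite {1}eb Rg_blk //; lia.
  have hb12 : b1 < b2.
    have : b1 <= b2 by rewrite /b1 /b2; lia.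
    rewrite leq_eqVlt => /orP[/eqP e|] //.
    by move: hR; rewrite hRa hRb' e eqxx.
  have hb2 : b2 < 3 + 4 * k by rewrite /b2; lia.
  have hb1 : b1 < 3 + 4 * k by lia.
  have [t [ht [x [hx H]]]] := k44_cover sel (y := (a - 1) %% 4) (z := (b - 1) %% 4 + 4)
     ltac:(lia) ltac:(lia).
  exists (inr (Ordinal hb1, Ordinal hb2, t == 1)); split.
    by rewrite /= hb12 -hRa -hRb' hR.
  exists x; split => //; rewrite /gv /= /tcv /=.
  have -> : nat_of_bool (t == 1) = t by case: t ht H => [|[|]].
  have e1 : phi (inr (b1, b2)) ((a - 1) %% 4) = a by rewrite /phi ifT; lia.
  have e2 : phi (inr (b1, b2)) ((b - 1) %% 4 + 4) = b by rewrite /phi ifF; lia.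
  by case: H => [[-> ->]|[-> ->]]; [left|right].
Qed.

Definition vtx k sel (i : Idx k) : 'I_8 -> 'I_(12 + 16 * k).+1 :=
  fun x => inord (gv sel i x).
Definition mk k sel (i : Idx k) : edge_set (12 + 16 * k).+1 := cycle8_edges (vtx sel i).

Lemma vtx_val k sel (i : Idx k) x : valid i -> nat_of_ord (vtx sel i x) = gv sel i x.
Proof. by move=> vi; rewrite /vtx inordK // gv_lt. Qed.

Lemma vtx_inj k sel (i : Idx k) : valid i -> injective (vtx sel i).
Proof.
move=> vi x y /(congr1 val) /=; rewrite !vtx_val // /gv => e.
case: (valid_vp vi) => hv ht.
case: (wfT_at (Tm_wf (pc i) sel) ht) => hs hu hq.
have := phi_inj hv (hq _ (ltn_ord x)) (hq _ (ltn_ord y)) e.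
by rewrite /tcv => /eqP; rewrite nth_uniq ?hs // => /eqP /val_inj.
Qed.

Lemma mk_8cycle k sel (i : Idx k) : valid i -> is_8cycle (mk sel i).
Proof. by move=> vi; exists (vtx sel i); split => //; apply: vtx_inj. Qed.

Lemma mk_disj k sel1 sel2 (i j : Idx k) : valid i -> valid j ->
  (sel1 == sel2) != (i == j) -> [disjoint mk sel1 i & mk sel2 j].
Proof.
move=> vi vj hd; rewrite -setI_eq0; apply/eqP/setP => e; rewrite !inE.
apply/negP => /andP[/imsetP[x _ ->] /imsetP[y _ /set2_eq H]].
apply: (gv_disj vi vj hd (ltn_ord x) (ltn_ord y)).
have V := fun s (l : Idx k) z (vl : valid l) => vtx_val s z vl.
case: H => [[e1 e2]|[e1 e2]]; [left|right];
  move: e1 e2 => /(congr1 val) /= e1 /(congr1 val) /= e2; rewrite !V // in e1 e2; by split.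
Qed.

Lemma mk_vertices k sel (i : Idx k) : vertices (mk sel i) = [set vtx sel i x | x : 'I_8].
Proof.
apply/setP => v; apply/bigcupP/imsetP.
- case=> e /imsetP[x _ ->]; rewrite !inE => /orP[/eqP ->|/eqP ->].
  + by exists x.
  + by exists (ordS x).
- case=> x _ ->; exists [set vtx sel i x; vtx sel i (ordS x)].
  + by apply: imset_f.
  + by rewrite !inE eqxx.
Qed.

Lemma mk_vert_eq k (i : Idx k) : valid i -> vertices (mk false i) = vertices (mk true i).
Proof.
move=> vi; rewrite !mk_vertices.
case: (valid_vp vi) => hv ht.
case: (Tm_ok (pc i)) => w0 w1 _ hvert.
case: (wfT_at w0 ht) => s0 _ _; case: (wfT_at w1 ht) => s1 _ _.
apply/setP => v; apply/imsetP/imsetP => -[x _ ->].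
- case: (vert_get hvert ht (ltn_ord x) s0 s1) => [[y [hy e]] _].
  exists (Ordinal hy) => //; apply: val_inj => /=; rewrite !vtx_val // /gv /tcv.
  by rewrite (Tm_sel _ true) (Tm_sel _ false) /= e.
- case: (vert_get hvert ht (ltn_ord x) s0 s1) => [_ [y [hy e]]].
  exists (Ordinal hy) => //; apply: val_inj => /=; rewrite !vtx_val // /gv /tcv.
  by rewrite (Tm_sel _ true) (Tm_sel _ false) /= e.
Qed.

Lemma mk_inj k sel (i j : Idx k) : valid i -> valid j -> mk sel i = mk sel j -> i = j.
Proof.
move=> vi vj e; apply/eqP; apply/negPn/negP => ne.
have := mk_disj (sel1 := sel) (sel2 := sel) vi vj; rewrite eqxx ne => /(_ isT).
rewrite e -setI_eq0 setIid => /eqP h.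
have := card_cycle8 (vtx_inj (sel := sel) vj); rewrite -/(mk sel j) h cards0.
done.
Qed.

Definition L0 k : edge_set (12 + 16 * k).+1 :=
  [set [set (inord (nth (0, 0) L13 p).1 : 'I_(12 + 16 * k).+1); inord (nth (0, 0) L13 p).2]
  | p : 'I_6].

Lemma L0_card k : #|L0 k| <= 6.
Proof. by rewrite (leq_trans (leq_imset_card _ _)) // card_ord. Qed.

Lemma mk_cover k sel e : e \in Kn_edges (12 + 16 * k).+1 -> e \notin L0 k ->
  exists i : Idx k, valid i /\ e \in mk sel i.
Proof.
rewrite inE => /cards2P [u [w [nuw ->]]].
wlog: u w nuw / val u < val w.
  move=> W; case: (ltngtP (val u) (val w)) => h; first exact: W.
  + by rewrite setUC; apply: W => //; rewrite eq_sym.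
  + by move: nuw; rewrite (val_inj h) eqxx.
move=> huw hL.
have hnot : ~ (cls u w = inl 0 /\ (val u, val w) \in L13).
  case=> _ hin; move/negP: hL; apply.
  apply/imsetP; exists (Ordinal (n := 6) (m := index (val u, val w) L13) ltac:(by rewrite index_mem)) => //.
  by rewrite /= nth_index //= !inord_val.
have [i [vi [x [hx H]]]] := gv_cover sel huw (ltn_ord w) hnot.
exists i; split => //; apply/imsetP; exists (Ordinal hx) => //.
have ->: vtx sel i (Ordinal hx) = (if gv sel i x == val u then u else w).
  by apply: val_inj => /=; rewrite vtx_val //; case: H => [[-> _]|[-> _]]; rewrite ?eqxx //;
     rewrite ifN //; apply: contra nuw => /eqP ee; apply/eqP/val_inj.
have ->: vtx sel i (ordS (Ordinal hx)) = (if gv sel i x == val u then w else u).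
  apply: val_inj => /=; rewrite vtx_val //=; case: H => [[-> ->]|[-> ->]]; rewrite ?eqxx //.
  by rewrite ifN //; apply: contra nuw => /eqP ee; apply/eqP/val_inj.
by case: ifP => // _; rewrite setUC.
Qed.

Lemma leave_L0 k (Q : {set edge_set (12 + 16 * k).+1}) :
  is_8packing Q ->
  (forall e, e \in Kn_edges (12 + 16 * k).+1 -> e \notin L0 k -> e \in cover Q) ->
  leave Q = L0 k.
Proof.
move=> pQ hc.
have sub : leave Q \subset L0 k.
  apply/subsetP => e; rewrite inE => /andP[he hK]; apply/negPn/negP => hL.
  by move: he; rewrite (hc e hK hL).
apply/eqP; rewrite eqEcard sub /=.
exact: leq_trans (L0_card k) (leave_lb pQ).
Qed.

Lemma main k : exists P : {set edge_set (12 + 16 * k).+1},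
  is_max_8packing P /\ almost_2perfect P.
Proof.
set D := [set i : Idx k | valid i].
set P := mk false @: D.
have memP : forall C, C \in P -> exists2 i, valid i & C = mk false i.
  by move=> C /imsetP[i]; rewrite inE => vi ->; exists i.
have packP : is_8packing P.
  split.
  - by move=> C /memP[i vi ->]; apply: mk_8cycle.
  - move=> C1 C2 /memP[i vi ->] /memP[j vj ->] ne.
    have nij : i != j by apply: contraNneq ne => ->.
    by apply: mk_disj => //; rewrite eqxx nij.
have leaveP : leave P = L0 k.
  apply: leave_L0 => // e hK hL.
  have [i [vi he]] := mk_cover false hK hL.
  by apply/bigcupP; exists (mk false i) => //; apply: imset_f; rewrite inE.
pose f (C : edge_set (12 + 16 * k).+1) :=
  if [pick i in D | mk false i == C] is Some i then mk true i else C.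
have fmk : forall i, valid i -> f (mk false i) = mk true i.
  move=> i vi; rewrite /f; case: pickP => [j /andP[]|/(_ i)].
  - by rewrite inE => vj /eqP /(mk_inj vj vi) ->.
  - by rewrite inE vi eqxx.
exists P; split.
  split => // Q pQ; rewrite leaveP; apply: leq_trans (L0_card k) (leave_lb pQ).
exists f; split; [|split; [|split]].
- move=> C /memP[i vi ->]; rewrite fmk //; split; first exact: mk_8cycle.
  split; first by rewrite mk_vert_eq.
  by apply: mk_disj => //; rewrite eqxx.
- move=> C1 C2 /memP[i vi ->] /memP[j vj ->] ne; rewrite !fmk //.
  have nij : i != j by apply: contraNneq ne => ->.
  by apply: mk_disj => //; rewrite eqxx nij.
- split.
  + by move=> C /imsetP[C0 /memP[i vi ->] ->]; rewrite fmk //; apply: mk_8cycle.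
  + move=> C1 C2 /imsetP[C0 /memP[i vi ->] ->] /imsetP[C3 /memP[j vj ->] ->] ne.
    rewrite !fmk // in ne *; have nij : i != j by apply: contraNneq ne => ->.
    by apply: mk_disj => //; rewrite eqxx nij.
- rewrite leaveP; apply: leave_L0.
  + split.
    * by move=> C /imsetP[C0 /memP[i vi ->] ->]; rewrite fmk //; apply: mk_8cycle.
    * move=> C1 C2 /imsetP[C0 /memP[i vi ->] ->] /imsetP[C3 /memP[j vj ->] ->] ne.
      rewrite !fmk // in ne *; have nij : i != j by apply: contraNneq ne => ->.
      by apply: mk_disj => //; rewrite eqxx nij.
  + move=> e hK hL.
    have [i [vi he]] := mk_cover true hK hL.
    apply/bigcupP; exists (mk true i) => //.
    by apply/imsetP; exists (mk false i); [apply: imset_f; rewrite inE | rewrite fmk].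
Qed.

Unset Implicit Arguments.

Theorem lemma3p7 (n : nat) :
  13 <= n -> n %% 16 = 13 ->
  exists P : {set edge_set n}, is_max_8packing P /\ almost_2perfect P.
Proof.
move=> h1 h2.
have E : n = (12 + 16 * (n %/ 16)).+1 by lia.
move: (n %/ 16) E => k E; subst n.
exact: main.
Qed.
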